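(* Let $(S,* )$ be a finite cycle set of size $n$ and Dehornoy class $d>1$, and let $d=p_1^{a_1}\cdots p_r^{a_r}$ be the prime factorization of $d$ (the $p_i$ pairwise distinct, $a_i\ge 1$). Then there exist cycle set structures $*_1,\dots,*_r$ on the same set $S$ such that the class $d_i$ of $(S,*_i)$ is a power of $p_i$ for each $i$, and the germ $\overline G$ of $(S,* )$ is the product set $$\overline G=\iota_{d_1}^{d}(\overline G_1)\,\iota_{d_2}^{d}(\overline G_2)\cdots\iota_{d_r}^{d}(\overline G_r),$$ where $\overline G_i$ is the germ of $(S,*_i)$. That is, every cycle set is obtained as a Zappa–Szép product of cycle sets whose classes are prime powers.
   Context: A cycle set is a set $S$ with a binary operation $*$ such that for every $s\in S$ the map $t\mapsto s*t$ is a bijection of $S$, and $(s*t)*(s*u)=(t*s)*(t*u)$ for all $s,t,u\in S$. For a finite cycle set $S=\{s_1,\dots,s_n\}$, let $\psi(s)\in\mathfrak S_n$ be the permutation with $s_i*s_j=s_{\psi(s_i)(j)}$, and let $T(s)=s*s$. For $k\ge 0$ put $\psi_k(s)=\psi(T^{k-1}(s))\circ\cdots\circ\psi(T(s))\circ\psi(s)$ ($\psi_0(s)=\mathrm{id}$). The (Dehornoy) class of $S$ is the smallest integer $d\ge 1$ with $\psi_d(s)=\mathrm{id}$ for all $s\in S$ (it exists). For $\sigma\in\mathfrak S_n$, $P_\sigma$ is the $n\times n$ matrix with entry $1$ at position $(i,\sigma(i))$ and $0$ elsewhere. Let $\zeta_m=e^{2i\pi/m}$. The germ of a cycle set of class $d$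 on $S$ is the subgroup of $GL_n(\mathbb C)$ generated by the matrices $\bar s_i=\mathrm{diag}(1,\dots,1,\zeta_d,1,\dots,1)P_{\psi(s_i)}$ ($\zeta_d$ in the $i$-th diagonal position), $1\le i\le n$; it is a group of monomial matrices whose nonzero entries are $d$-th roots of unity. For $m\mid d$, $\iota_m^{d}$ denotes the embedding of the group of $n\times n$ monomial matrices with nonzero entries in the $m$-th roots of unity into the analogous group for $d$-th roots of unity, obtained by replacing each entry $\zeta_m^{j}$ by $\zeta_d^{jd/m}$. For subsets $A,B$ of a group, $AB=\{ab: a\in A,b\in B\}$. *)

(* Defs.v *)
From HB Require Import structures.
From mathcomp Require Import all_boot all_order all_algebra all_field.
Set Implicit Arguments. Unset Strict Implicit. Unset Printing Implicit Defensive.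
Import Order.TTheory GRing.Theory Num.Theory.
Local Open Scope ring_scope.

(* A finite cycle set on S = {s_0,...,s_(n-1)} = 'I_n, given by op s t = s * t. *)
Definition is_cycle_set (n : nat) (op : 'I_n -> 'I_n -> 'I_n) : Prop :=
  (forall s, bijective (op s)) /\
  (forall s t u, op (op s t) (op s u) = op (op t s) (op t u)).

Definition Tsq (n : nat) (op : 'I_n -> 'I_n -> 'I_n) (s : 'I_n) : 'I_n := op s s.

Fixpoint psik (n : nat) (op : 'I_n -> 'I_n -> 'I_n) (k : nat) (s : 'I_n) (t : 'I_n)
  : 'I_n :=
  match k with
  | 0 => t
  | k'.+1 => op (iter k' (Tsq op) s) (psik op k' s t)
  end.

Definition is_class (n : nat) (op : 'I_n -> 'I_n -> 'I_n) (d : nat) : Prop :=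
  (0 < d)%N /\ (forall s t, psik op d s t = t) /\
  (forall d', (0 < d')%N -> (d' < d)%N -> exists s t, psik op d' s t <> t).

(* zeta_m = exp(2 i pi / m): m.-root (-1) is exp(i pi / m) in algC. *)
Definition zeta (m : nat) : algC := (m.-root (-1)) ^+ 2.

(* The generator bar s_i = diag(1,..,zeta_d (i-th),..,1) * P_(psi(s_i)),
   where P_sigma has 1 at (a, sigma a). *)
Definition germ_gen (n : nat) (op : 'I_n -> 'I_n -> 'I_n) (d : nat) (i : 'I_n)
  : 'M[algC]_n :=
  \matrix_(a < n, b < n)
    ((if a == i then zeta d else 1) * (op i a == b)%:R).

Inductive gen_group (n : nat) (I : Type) (g : I -> 'M[algC]_n) : 'M[algC]_n -> Prop :=
  | gg_one : gen_group g 1%:M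
  | gg_gen : forall i, gen_group g (g i)
  | gg_mul : forall a b, gen_group g a -> gen_group g b -> gen_group g (a *m b)
  | gg_inv : forall a, gen_group g a -> gen_group g (invmx a).

Definition germ (n : nat) (op : 'I_n -> 'I_n -> 'I_n) (d : nat) : 'M[algC]_n -> Prop :=
  gen_group (germ_gen op d).

(* iota_m^d : replace each entry zeta_m^j by zeta_d^(j d/m) (other entries, i.e. 0,
   are left unchanged). *)
Definition iota_entry (m d : nat) (x : algC) : algC :=
  if [pick j : 'I_m | x == zeta m ^+ j] is Some j
  then zeta d ^+ (j * (d %/ m))%N else x.

Definition iota_mx (m d : nat) (n : nat) (A : 'M[algC]_n) : 'M[algC]_n :=
  map_mx (iota_entry m d) A.

Definition prodmx (n : nat) (As : seq 'M[algC]_n) : 'M[algC]_n :=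
  foldr (fun A B => A *m B) 1%:M As.

(* Main.v *)
Require Import Defs.
From HB Require Import structures.
From mathcomp Require Import all_boot all_order all_algebra all_field.
From mathcomp Require Import ring zify.
From Stdlib Require Import FunctionalExtensionality.
Import Order.TTheory GRing.Theory Num.Theory.
Local Open Scope ring_scope.

Set Implicit Arguments. Unset Strict Implicit. Unset Printing Implicit Defensive.

Lemma geom0 (x : algC) (n : nat) : x ^+ n = 1 -> x != 1 -> \sum_(j < n) x ^+ j = 0.
Proof.
move=> xn x1; have := subrX1 x n; rewrite xn subrr => /esym/eqP.
by rewrite mulf_eq0 subr_eq0 (negbTE x1) /= => /eqP.
Qed.

Lemma unit_pow (u : algC) a b : u * u^* = 1 ->
  u ^+ a * (u^*) ^+ b = if (b <= a)%N then u ^+ (a - b) else (u^*) ^+ (b - a).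
Proof.
move=> uu; case: leqP => ba.
  by rewrite -{1}(subnK ba) exprD -mulrA -[u ^+ b * _]exprMn uu expr1n mulr1.
by rewrite -{1}(subnK (ltnW ba)) exprD mulrCA -[u ^+ a * _]exprMn uu expr1n mulr1.
Qed.

Lemma unit_of_pow (u : algC) k : (0 < k)%N -> u ^+ k = 1 \/ u ^+ k = -1 -> u * u^* = 1.
Proof.
move=> k0 h; rewrite -normCK; have : `|u| ^+ k = 1.
  by rewrite -normrX; case: h => ->; rewrite ?normr1 ?normrN1.
by move/eqP; rewrite pexpr_eq1 // => /eqP ->; rewrite expr1n.
Qed.

Section Kernel.
Variables (n : nat) (y om : algC).
Hypothesis n_gt0 : (0 < n)%N.
Hypothesis yy : y * y^* = 1.
Hypothesis prim : n.-primitive_root om.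
Let w (j : nat) := y * om ^+ j.

Lemma om_unit : om * om^* = 1.
Proof. apply: (unit_of_pow n_gt0); left; exact: prim_expr_order. Qed.

Lemma w_unit j : w j * (w j)^* = 1.
Proof.
rewrite /w rmorphM rmorphXn /= mulrACA yy mul1r -exprMn om_unit expr1n //.
Qed.

Lemma sum_pow s : (s < n)%N -> \sum_(j < n) (w j) ^+ s = (s == 0)%:R * n%:R.
Proof.
move=> sn.
have -> : \sum_(j < n) w j ^+ s = y ^+ s * \sum_(j < n) (om ^+ s) ^+ j.
  rewrite mulr_sumr; apply: eq_bigr => j _; by rewrite /w exprMn exprAC.
case: (eqVneq s 0) => [->|s0].
  rewrite expr0 mul1r mul1r; under eq_bigr do rewrite expr1n.
  by rewrite sumr_const card_ord.
rewrite geom0 ?mulr0 ?mul0r //.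
  by rewrite exprAC (prim_expr_order prim) expr1n.
by rewrite -(prim_order_dvd prim); apply/negP => /dvdn_leq; rewrite lt0n s0 => /(_ isT); rewrite leqNgt sn.
Qed.

Lemma Msum a b : (a < n)%N -> (b < n)%N ->
  \sum_(j < n) (w j) ^+ a * ((w j)^*) ^+ b = (a == b)%:R * n%:R.
Proof.
move=> an bn; under eq_bigr do rewrite unit_pow ?w_unit //.
case: leqP => ba.
  rewrite sum_pow; last by apply: leq_ltn_trans (leq_subr _ _) an.
  by rewrite subn_eq0 eqn_leq ba andbT.
have -> : \sum_(j < n) (w j)^* ^+ (b - a) = (\sum_(j < n) (w j) ^+ (b - a))^*.
  by rewrite rmorph_sum; apply: eq_bigr => j _; rewrite rmorphXn.
rewrite sum_pow; last by apply: leq_ltn_trans (leq_subr _ _) bn.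
by rewrite subn_eq0 leqNgt ba (ltn_eqF ba) /= !mul0r conjC0.
Qed.

Lemma sum_kron (N x : nat) (g : nat -> algC) :
  \sum_(b < N) (x == b)%:R * g b = (x < N)%:R * g x.
Proof.
elim: N => [|N IH]; first by rewrite big_ord0 ltn0 mul0r.
rewrite big_ord_recr /= IH.
have [->|xN] := eqVneq x N; first by rewrite ltnn leqnn mul0r add0r.
by rewrite ltnS (leq_eqVlt x N) (negbTE xN) /= mul0r addr0.
Qed.

Lemma Bil N (al be : nat -> algC) : (N <= n)%N ->
  \sum_(j < n) ((\sum_(a < N) al a * w j ^+ a) * (\sum_(b < N) be b * (w j)^* ^+ b))
  = n%:R * \sum_(a < N) al a * be a.
Proof.
move=> Nn.
under eq_bigr do rewrite mulr_suml.
rewrite exchange_big /= mulr_sumr; apply: eq_bigr => a _.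
under eq_bigr do rewrite mulr_sumr.
rewrite exchange_big /=.
under eq_bigr => b _.
  under eq_bigr do rewrite mulrACA.
  rewrite -mulr_sumr Msum ?(leq_trans (ltn_ord _) Nn) //.
  over.
rewrite /=.
rewrite (eq_bigr (fun i : 'I_N => (a == i)%:R * (n%:R * (al a * be i)))); last first.
  by move=> i _; rewrite mulrC mulrA.
by rewrite (sum_kron N a (fun b => n%:R * (al a * be b))) ltn_ord mul1r.
Qed.
End Kernel.

Section Kernel2.
Variables (N : nat) (y om c : algC).
Hypothesis yy : y * y^* = 1.
Hypothesis prim : N.+1.-primitive_root om.
Let w (j : nat) := y * om ^+ j.
Let n := N.+1.
Definition pk (a : nat) : algC := (a.+1)%:R * (n%:R - 1 - a%:R).
Definition Pk (u : algC) := \sum_(a < N) pk a * u ^+ a.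
Definition Ak := \sum_(a < N) pk a * pk a.
Definition Bk := \sum_(a < N) pk a * pk a.+1.

Lemma pk_real a : (pk a)^* = pk a.
Proof. by rewrite /pk rmorphM !rmorphB /= !conjC_nat conjC1. Qed.

Lemma pkN : pk N = 0.
Proof. by rewrite /pk /n -natr1 addrK subrr mulr0. Qed.

Lemma Pk_conj u : (Pk u)^* = \sum_(b < N) pk b * (u^*) ^+ b.
Proof.
by rewrite /Pk rmorph_sum; apply: eq_bigr => b _; rewrite rmorphM rmorphXn /= pk_real.
Qed.

Lemma Bk_real : Bk^* = Bk.
Proof. by rewrite /Bk rmorph_sum; apply: eq_bigr => a _; rewrite rmorphM /= !pk_real. Qed.

Lemma kernel_sum :
  \sum_(j < n) (c - 'Re (w j)) * (Pk (w j) * (Pk (w j))^*) = n%:R * (c * Ak - Bk).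
Proof.
have n0 : (0 < n)%N by [].
have e1 : forall u : algC, (c - 'Re u) * (Pk u * (Pk u)^*) =
   c * (Pk u * (Pk u)^*) - ((u * Pk u) * (Pk u)^* + ((u * Pk u) * (Pk u)^*)^*) / 2.
  move=> u; rewrite ReE rmorphM /= conjCK; ring.
under eq_bigr do rewrite e1.
rewrite sumrB -mulr_sumr -mulr_suml big_split /= -rmorph_sum.
have S1 : \sum_(j < n) Pk (w j) * (Pk (w j))^* = n%:R * Ak.
  under eq_bigr do rewrite Pk_conj.
  by rewrite (@Bil n y om n0 yy prim N pk pk) // leqnSn.
have S2 : \sum_(j < n) w j * Pk (w j) * (Pk (w j))^* = n%:R * Bk.
  pose p' (a : nat) := if a is a'.+1 then pk a' else 0.
  have -> : \sum_(j < n) w j * Pk (w j) * (Pk (w j))^* =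
     \sum_(j < n) ((\sum_(a < n) p' a * w j ^+ a) * (\sum_(b < n) pk b * (w j)^* ^+ b)).
    apply: eq_bigr => j _; rewrite Pk_conj; congr (_ * _).
      rewrite /Pk big_ord_recl /= mul0r add0r mulr_sumr; apply: eq_bigr => a _.
      by rewrite /bump /= exprS mulrCA.
    by rewrite big_ord_recr /= pkN mul0r addr0.
  rewrite (@Bil n y om n0 yy prim n p' pk) //; congr (_ * _).
  by rewrite big_ord_recl /= mul0r add0r.
have h2 : forall x : algC, (x + x) / 2 = x.
  by move=> x; field.
rewrite S1 S2 rmorphM /= conjC_nat Bk_real h2; ring.
Qed.
End Kernel2.

Lemma sumA_cf M (K : algC) :
  30 * \sum_(a < M) ((a%:R + 1) * (K - a%:R)) * ((a%:R + 1) * (K - a%:R)) =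
  let x := M%:R in
  4*x + 10*x*K + 5*x*K^+2 + 15*x^+2*K + 15*x^+2*K^+2 - 10*x^+3 - 10*x^+3*K
  + 10*x^+3*K^+2 - 15*x^+4*K + 6*x^+5.
Proof.
elim: M => [|M IH]; first by rewrite big_ord0 /=; ring.
by rewrite big_ord_recr /= mulrDr IH /= -natr1; ring.
Qed.

Lemma sumB_cf M (K : algC) :
  30 * \sum_(a < M) ((a%:R + 1) * (K - a%:R)) * ((a%:R + 2) * (K - 1 - a%:R)) =
  let x := M%:R in
  - 6*x + 10*x*K + 20*x*K^+2 - 15*x^+2 - 15*x^+2*K + 30*x^+2*K^+2 - 40*x^+3*K
  + 10*x^+3*K^+2 + 15*x^+4 - 15*x^+4*K + 6*x^+5.
Proof.
elim: M => [|M IH]; first by rewrite big_ord0 /=; ring.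
by rewrite big_ord_recr /= mulrDr IH /= -natr1; ring.
Qed.


Lemma nat_contra (n m : nat) : (0 < m)%N -> (3 * m <= n)%N ->
  (2 * n ^ 5 + 5 * m ^ 2 * n <= 5 * m ^ 2 * n ^ 3 + 2 * n)%N -> False.
Proof.
move=> m0 mn; rewrite !expnS !expn0 !muln1 => h.
have h1 : (9 * (m * m) <= n * n)%N by have := leq_mul mn mn; lia.
have h2 : (45 * (m * m) * (n * n * n) <= 5 * (n * n * n * n * n))%N.
  by have := leq_mul h1 (leqnn (5 * (n * n * n))); lia.
have n3 : (3 <= n)%N by lia.
have h3 : (9 * n <= n * n * n)%N.
  by have := leq_mul (leq_mul n3 n3) (leqnn n); lia.
have h4 : (27 * n <= n * n * n * n * n)%N.
  by have := leq_mul h3 (leq_mul n3 (leqnn n)); nia.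
lia.
Qed.

Lemma key (N m : nat) (y : algC) : (0 < m)%N -> (3 * m <= N.+1)%N ->
  y ^+ N.+1 = -1 -> y ^+ m = -1 ->
  (forall w, w ^+ N.+1 = -1 -> 'Re w <= 'Re y) -> False.
Proof.
move=> m0 mn yn ym ymax.
set n := N.+1.
have yy : y * y^* = 1 by apply: (unit_of_pow m0); right.
have n0 : (0 < n)%N by [].
have [om prim] := C_prim_root_exists n0.
set c := 'Re y.
have cR : c^* = c by rewrite /c; apply/CrealP; exact: Creal_Re.
have S0 : 0 <= n%:R * (c * Ak N - Bk N).
  rewrite -(kernel_sum c yy prim); apply: sumr_ge0 => j _.
  apply: mulr_ge0; last exact: mul_conjC_ge0.
  rewrite subr_ge0; apply: ymax.
  by rewrite exprMn exprAC (prim_expr_order prim) expr1n mulr1.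
have H1 : Bk N <= c * Ak N.
  by rewrite -subr_ge0; move: S0; rewrite pmulr_rge0 // ltr0n.
have H2 : 4 <= m%:R ^+ 2 * (2 - 2 * c).
  have e : (y - 1) * \sum_(i < m) y ^+ i = - 2.
    by rewrite -subrX1 ym; ring.
  have nS : `|\sum_(i < m) y ^+ i| <= m%:R.
    apply: le_trans (ler_norm_sum _ _ _) _.
    have ny : `|y| = 1.
      by apply/eqP; rewrite -(pexpr_eq1 (n:=2)) // normCK yy.
    under eq_bigr do rewrite normrX ny expr1n.
    by rewrite sumr_const card_ord.
  have e2 : `|y - 1| * `|\sum_(i < m) y ^+ i| = 2.
    by rewrite -normrM e normrN normr_nat.
  have le2 : 2 <= `|y - 1| * m%:R.
    by rewrite -e2 ler_wpM2l.
  have e3 : `|y - 1| ^+ 2 = 2 - 2 * c.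
    rewrite normCK rmorphB /= rmorph1 /c ReE.
    have h : 2 * ((y + y^*) / 2) = y + y^* by field.
    rewrite h.
    have -> : (y - 1) * (y^* - 1) = y * y^* - y - y^* + 1 by ring.
    rewrite yy; ring.
  rewrite -e3 -exprMn [_ * `|_|]mulrC.
  have -> : (4 : algC) = 2 ^+ 2 by rewrite expr2; ring.
  by rewrite lerXn2r // ?nnegrE ?mulr_ge0 //.
have pkE : forall a, pk N a = (a%:R + 1) * (N%:R - a%:R).
  by move=> a; rewrite /pk -[(N.+1)%:R]natr1 addrK -[(a.+1)%:R]natr1.
have pkN : forall a, (a <= N)%N -> pk N a = ((a.+1) * (N - a))%:R.
  by move=> a aN; rewrite pkE natrM natrB // natr1.
have HA : 30 * Ak N = let x := N%:R in
  4*x + 10*x*x + 5*x*x^+2 + 15*x^+2*x + 15*x^+2*x^+2 - 10*x^+3 - 10*x^+3*x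
  + 10*x^+3*x^+2 - 15*x^+4*x + 6*x^+5.
  by rewrite /Ak; under eq_bigr do rewrite pkE; rewrite sumA_cf.
have HB : 30 * Bk N = let x := N%:R in
  - 6*x + 10*x*x + 20*x*x^+2 - 15*x^+2 - 15*x^+2*x + 30*x^+2*x^+2 - 40*x^+3*x
  + 10*x^+3*x^+2 + 15*x^+4 - 15*x^+4*x + 6*x^+5.
  rewrite /Bk; under eq_bigr => a _.
    rewrite !pkE -[(a.+1)%:R]natr1.
    have -> : (a%:R + 1 + 1) * (N%:R - (a%:R + 1)) = (a%:R + 2) * (N%:R - 1 - a%:R) :> algC by ring.
    over.
  by rewrite sumB_cf.
have A0 : 0 <= Ak N.
  by apply: sumr_ge0 => a _; rewrite pkN ?(ltnW (ltn_ord a)) // -natrM ler0n.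
have H3 : 2 * m%:R ^+ 2 * Bk N + 4 * Ak N <= 2 * m%:R ^+ 2 * Ak N.
  have h1 : 2 * m%:R ^+ 2 * Bk N <= 2 * m%:R ^+ 2 * c * Ak N.
    by rewrite -[X in _ <= X]mulrA ler_wpM2l ?mulr_ge0 ?exprn_ge0 ?ler0n.
  have h2 : 2 * m%:R ^+ 2 * c * Ak N <= (2 * m%:R ^+ 2 - 4) * Ak N.
    apply: ler_wpM2r => //.
    rewrite -subr_ge0.
    have -> : (2 * m%:R ^+ 2 - 4) - 2 * m%:R ^+ 2 * c = m%:R ^+ 2 * (2 - 2 * c) - 4 by ring.
    by rewrite subr_ge0.
  rewrite -subr_ge0.
  have -> : 2 * m%:R ^+ 2 * Ak N - (2 * m%:R ^+ 2 * Bk N + 4 * Ak N) =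
    (2 * m%:R ^+ 2 - 4) * Ak N - 2 * m%:R ^+ 2 * Bk N by ring.
  by rewrite subr_ge0 (le_trans h1 h2).
apply: (nat_contra m0 mn).
rewrite -(ler_nat algC) -subr_ge0.
have -> : ((5 * m ^ 2 * n ^ 3 + 2 * n)%:R - (2 * n ^ 5 + 5 * m ^ 2 * n)%:R : algC) =
   15 * (2 * m%:R ^+ 2 * Ak N - (2 * m%:R ^+ 2 * Bk N + 4 * Ak N)).
  have -> : 15 * (2 * m%:R ^+ 2 * Ak N - (2 * m%:R ^+ 2 * Bk N + 4 * Ak N)) =
    m%:R ^+ 2 * (30 * Ak N) - m%:R ^+ 2 * (30 * Bk N) - 2 * (30 * Ak N) by ring.
  rewrite HA HB /= !natrD !natrM /n -natr1; ring.
by rewrite mulr_ge0 // subr_ge0.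
Qed.



Lemma N1neq1 : (-1 : algC) != 1.
Proof. by rewrite -subr_eq0 -opprD oppr_eq0 -(natrD _ 1 1) pnatr_eq0. Qed.

Lemma zeta_prim2 N : (N.+2).-primitive_root (zeta N.+2).
Proof.
pose n := N.+2; pose y : algC := n.-root (-1).
have yn : y ^+ n = -1 by rewrite /y rootCK.
have y2n : y ^+ (2 * n) = 1 by rewrite mulnC exprM yn expr2 mulrNN mulr1.
have [o po o2n] := prim_order_exists (isT : (0 < 2 * n)%N) y2n.
suff oE : o = (2 * n)%N.
  move: po; rewrite oE => po'; have := exp_prim_root po' 2.
  by rewrite /zeta -/n -/y gcdnMr mulKn.
have o0 := prim_order_gt0 po.
have ndn : ~~ (o %| n)%N.
  by rewrite (prim_order_dvd po) yn N1neq1.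
apply/eqP; apply/negPn/negP => oneq.
have oev : ~~ odd o.
  apply/negP => oodd; move: ndn; rewrite -(@Gauss_dvdr o 2 n) ?coprimen2 //.
  by rewrite o2n.
set m := o./2.
have om : o = (2 * m)%N by rewrite /m -{1}(odd_double_half o) (negbTE oev) add0n mul2n.
have m0 : (0 < m)%N by move: o0; rewrite om; lia.
have mn : (m %| n)%N by move: o2n; rewrite om dvdn_pmul2l.
have ym : y ^+ m = -1.
  have : (y ^+ m) ^+ 2 == 1 by rewrite -exprM mulnC -om (prim_expr_order po).
  rewrite sqrf_eq1 => /orP[|/eqP //].
  by rewrite -(prim_order_dvd po) => /(dvdn_leq m0); rewrite om; lia.
have [k nk] := dvdnP mn.
have k1 : k != 1%N.
  by apply/eqP => k1; move: oneq; rewrite om nk k1 mul1n eqxx.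
have k2 : k != 2%N.
  by apply/eqP => k2; move: ndn; rewrite om nk k2 dvdnn.
have k0 : (0 < k * m)%N by rewrite -nk.
have k3 : (3 <= k)%N.
  move: k0; rewrite muln_gt0 => /andP[k0 _]; move: k0 k1 k2; case: k {nk} => [|[|[|k]]] //.
have mn3 : (3 * m <= N.+2)%N by rewrite -/n nk leq_mul2r k3 orbT.
apply: (key m0 mn3 yn ym) => w wn.
have [Iw|Iw] := boolP (0 <= 'Im w).
  exact: rootC_Re_max.
rewrite -Re_conj; apply: rootC_Re_max => //.
  by rewrite -rmorphXn /= wn rmorphN1.
rewrite Im_conj oppr_ge0; move: Iw.
by have := Creal_Im w; rewrite realE => /orP[->|] //.
Qed.

Lemma zeta_expn n : (0 < n)%N -> zeta n ^+ n = 1.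
Proof. by move=> n0; rewrite /zeta -exprM mulnC exprM rootCK // expr2 mulrNN mulr1. Qed.

Lemma zeta_eq n a b : (0 < n)%N -> (zeta n ^+ a == zeta n ^+ b) = (a == b %[mod n]).
Proof.
case: n => [//|[|N]] _.
  by rewrite !modn1 /zeta root1C expr2 mulrNN mulr1 !expr1n eqxx.
by rewrite (eq_prim_root_expr (zeta_prim2 N)).
Qed.


Local Close Scope ring_scope.

Section CS.
Variables (n : nat) (op : 'I_n -> 'I_n -> 'I_n).
Hypothesis Hcs : is_cycle_set op.

Definition F (l : seq 'I_n) : 'I_n -> 'I_n :=
  foldl (fun f u => fun t => op (f u) (f t)) id l.

Lemma F_nil : F [::] = id. Proof. by []. Qed.

Lemma F_rcons l u : F (rcons l u) = fun t => op (F l u) (F l t).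
Proof. by rewrite /F foldl_rcons. Qed.

Lemma F_cat l k : F (l ++ k) = F (map (F l) k) \o F l.
Proof.
elim/last_ind: k => [|k u IH]; first by rewrite cats0.
by rewrite -rcons_cat map_rcons !F_rcons IH.
Qed.

Lemma op_inj s : injective (op s).
Proof. by case: Hcs => /(_ s) /bij_inj. Qed.

Lemma F_inj l : injective (F l).
Proof.
elim/last_ind: l => [|l u IH] //; rewrite F_rcons => x y /op_inj; exact: IH.
Qed.

Lemma F_swap2 a b : F [:: a; b] = F [:: b; a].
Proof.
apply: functional_extensionality => t.
by rewrite -[[:: a; b]]/(rcons [:: a] b) -[[:: b; a]]/(rcons [:: b] a) !F_rcons; case: Hcs => _ ->.
Qed.

Lemma F_swap l a b k : F (l ++ a :: b :: k) = F (l ++ b :: a :: k).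
Proof.
have e : forall x y, l ++ x :: y :: k = (l ++ [:: x; y]) ++ k by move=> x y; rewrite -catA.
suff E : F (l ++ [:: a; b]) = F (l ++ [:: b; a]) by rewrite !e F_cat E -F_cat.
by rewrite !F_cat; congr (_ \o _); exact: F_swap2.
Qed.

Lemma F_move l u k : F (l ++ u :: k) = F (rcons (l ++ k) u).
Proof.
elim: k l => [|x k IH] l; first by rewrite cats0 cats1.
by rewrite F_swap -cat_rcons IH cat_rcons.
Qed.

Lemma F_perm l1 l2 : perm_eq l1 l2 -> F l1 = F l2.
Proof.
elim/last_ind: l1 l2 => [|l1 u IH] l2.
  by rewrite perm_sym => /perm_nilP ->.
move=> pe; have uin : u \in l2 by rewrite -(perm_mem pe) mem_rcons mem_head.
move: pe; case/splitPr: uin => l2a l2b pe.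
rewrite F_move !F_rcons (IH (l2a ++ l2b)) //.
rewrite -(perm_cons u); apply: (@perm_trans _ (l2a ++ u :: l2b)); last by rewrite (perm_catCA l2a [:: u] l2b).
by apply: (@perm_trans _ (rcons l1 u)) => //; rewrite perm_sym perm_rcons.
Qed.

Lemma F_catC l k : F (l ++ k) = F (k ++ l).
Proof. by apply: F_perm; rewrite perm_catC. Qed.

Lemma nseqSr k (s : 'I_n) : nseq k.+1 s = rcons (nseq k s) s.
Proof. by elim: k => //= k ->. Qed.

Lemma F_nseq_self k s : F (nseq k s) s = iter k (Tsq op) s.
Proof. by elim: k => // k IH; rewrite nseqSr F_rcons IH iterS. Qed.

Lemma psik_F k s t : psik op k s t = F (nseq k s) t.
Proof. by elim: k t => // k IH t; rewrite nseqSr F_rcons /= IH F_nseq_self. Qed.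


Lemma F_id_pad k : (forall s, F (nseq k s) = id) ->
  forall j l s, F (l ++ nseq (j * k) s) = F l.
Proof.
move=> Hk; elim=> [|j IH] l s; first by rewrite mul0n cats0.
by rewrite mulSnr nseqD catA F_cat map_nseq Hk IH.
Qed.

Lemma cnt_flat (g : 'I_n -> nat) x :
  count_mem x (flatten [seq nseq (g a) a | a <- enum 'I_n]) = g x.
Proof.
rewrite count_flatten -map_comp sumnE big_map big_enum /=.
under eq_bigr do rewrite count_nseq.
rewrite (bigD1 x) //= eqxx mul1n big1 ?addn0 // => a /negbTE.
by rewrite eq_sym => ->.
Qed.

Lemma F_pad_seq k : (forall s, F (nseq k s) = id) ->
  forall (g : 'I_n -> nat) r l, F (l ++ flatten [seq nseq (g a * k) a | a <- r]) = F l.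
Proof.
move=> Hk g; elim=> [|x r IH] l; first by rewrite cats0.
by rewrite /= catA IH F_id_pad.
Qed.

Section Class.
Variable d : nat.
Hypothesis Hcl : is_class op d.

Lemma F_d s : F (nseq d s) = id.
Proof.
case: Hcl => _ [H _]; apply: functional_extensionality => t.
by rewrite -psik_F H.
Qed.

Lemma class_dvd k : (0 < k)%N -> (forall s, F (nseq k s) = id) -> (d %| k)%N.
Proof.
move=> k0 Hk; case: Hcl => d0 [_ Hmin].
case: (egcdnP d k0) => km kn E _.
set g := gcdn k d in E.
have g0 : (0 < g)%N by rewrite gcdn_gt0 k0.
have gd : (g <= d)%N by apply: dvdn_leq => //; exact: dvdn_gcdr.
have Fg : forall s, F (nseq g s) = id.
  move=> s; rewrite -(F_id_pad F_d kn (nseq g s) s) -nseqD addnC -E.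
  by rewrite -[nseq _ _]cat0s F_id_pad.
case: (ltngtP g d) gd => // [gltd|<-] _; last exact: dvdn_gcdl.
have [s [t]] := Hmin g g0 gltd.
by rewrite psik_F Fg.
Qed.

Lemma F_mod l k : (forall a, count_mem a l = count_mem a k %[mod d]) -> F l = F k.
Proof.
move=> Hlk.
pose gl (a : 'I_n) := (count_mem a l %/ d)%N.
pose gk (a : 'I_n) := (count_mem a k %/ d)%N.
rewrite -(F_pad_seq F_d gk (enum 'I_n) l) -(F_pad_seq F_d gl (enum 'I_n) k).
apply: F_perm; apply/allP => x _; apply/eqP.
rewrite !count_cat (cnt_flat (fun a => gk a * d)%N) (cnt_flat (fun a => gl a * d)%N) /gk /gl.
rewrite {1}(divn_eq (count_mem x l) d) {2}(divn_eq (count_mem x k) d) (Hlk x).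
ring.
Qed.
End Class.
End CS.


Section Sub.
Variables (n : nat) (op : 'I_n -> 'I_n -> 'I_n).
Hypothesis Hcs : is_cycle_set op.
Variable m : nat.

Definition op_sub (s t : 'I_n) : 'I_n := F op (nseq m s) t.
Definition Ex (l : seq 'I_n) : seq 'I_n := flatten [seq nseq m u | u <- l].

Lemma F_sub l : F op_sub l = F op (Ex l).
Proof.
elim/last_ind: l => [|l u IH] //.
rewrite F_rcons IH /Ex map_rcons flatten_rcons -/(Ex l) F_cat // map_nseq.
by apply: functional_extensionality => t.
Qed.

Lemma cs_sub : is_cycle_set op_sub.
Proof.
split.
  by move=> s; apply: injF_bij; apply: F_inj.
move=> s t u; rewrite /op_sub.
have E : forall x y : 'I_n, F op (nseq m (F op (nseq m x) y)) (F op (nseq m x) u)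
   = F op (nseq m x ++ nseq m y) u.
  by move=> x y; rewrite F_cat // map_nseq.
by rewrite !E F_catC.
Qed.

Lemma Ex_cons x l : Ex (x :: l) = nseq m x ++ Ex l.
Proof. by []. Qed.

Lemma Ex_nseq k s : Ex (nseq k s) = nseq (k * m) s.
Proof. by elim: k => // k IH; rewrite [nseq _ _]/= Ex_cons IH mulSn nseqD. Qed.

Lemma cnt_Ex l a : count_mem a (Ex l) = (m * count_mem a l)%N.
Proof.
elim: l => [|x l IH]; first by rewrite muln0.
by rewrite Ex_cons count_cat IH count_nseq /= mulnDr mulnC.
Qed.

Lemma psik_sub k s t : psik op_sub k s t = F op (nseq (k * m) s) t.
Proof. by rewrite psik_F F_sub Ex_nseq. Qed.

Variables (d q : nat).
Hypothesis Hcl : is_class op d.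
Hypothesis dqm : d = (q * m)%N.
Hypothesis q0 : (0 < q)%N.

Lemma class_sub : is_class op_sub q.
Proof.
have m0 : (0 < m)%N by case: Hcl => d0 _; move: d0; rewrite dqm muln_gt0 => /andP[].
split => //; split.
  by move=> s t; rewrite psik_sub -dqm (F_d Hcl).
move=> k k0 kq.
case: (pickP (fun st : 'I_n * 'I_n => psik op_sub k st.1 st.2 != st.2)) => [[s t] /eqP H|H].
  by exists s, t.
have Hk : forall s, F op (nseq (k * m) s) = id.
  move=> s; apply: functional_extensionality => t.
  by move: (H (s, t)) => /= /negbFE/eqP; rewrite psik_sub.
have := class_dvd Hcl; rewrite dqm => /(_ (k * m)%N).
rewrite muln_gt0 k0 m0 dvdn_pmul2r // => /(_ isT Hk) /(dvdn_leq k0).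
by rewrite leqNgt kq.
Qed.
End Sub.

Local Open Scope ring_scope.


Section Mat.
Variable n : nat.

Definition Mx (z : algC) (v : 'I_n -> nat) (s : 'I_n -> 'I_n) : 'M[algC]_n :=
  \matrix_(a, b) (z ^+ v a * (s a == b)%:R).

Lemma eq_Mx z v v' s s' : v =1 v' -> s =1 s' -> Mx z v s = Mx z v' s'.
Proof. by move=> hv hs; apply/matrixP => a b; rewrite !mxE hv hs. Qed.

Lemma Mx_mul z v s w t :
  Mx z v s *m Mx z w t = Mx z (fun a => (v a + w (s a))%N) (t \o s).
Proof.
apply/matrixP => a c; rewrite !mxE (bigD1 (s a)) //= big1 ?addr0.
  by rewrite !mxE eqxx mulr1 exprD mulrA.
by move=> b /negbTE; rewrite !mxE eq_sym => ->; rewrite mulr0 mul0r.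
Qed.

Lemma Mx_1 z : Mx z (fun _ => 0%N) id = 1%:M.
Proof. by apply/matrixP => a b; rewrite !mxE expr0 mul1r. Qed.

Lemma Mx_mod z d v v' s : z ^+ d = 1 -> (forall a, v a = v' a %[mod d]) ->
  Mx z v s = Mx z v' s.
Proof.
by move=> zd H; apply/matrixP => a b; rewrite !mxE -(expr_mod _ zd) H expr_mod.
Qed.

Lemma invmx_eq (A B : 'M[algC]_n) : A *m B = 1%:M -> invmx A = B.
Proof.
move=> AB; have [Au _] := mulmx1_unit AB.
by rewrite -[invmx A]mulmx1 -AB mulmxA mulVmx // mul1mx.
Qed.

Section Good.
Variables (op : 'I_n -> 'I_n -> 'I_n) (d : nat).
Hypothesis Hcs : is_cycle_set op.

Definition Good (l : seq 'I_n) := Mx (zeta d) (fun a => count_mem a l) (F op l).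

Lemma cnt_map_inj (f : 'I_n -> 'I_n) k a : injective f ->
  count_mem (f a) (map f k) = count_mem a k.
Proof.
move=> fi; rewrite count_map; apply: eq_count => x /=.
by rewrite (inj_eq fi).
Qed.

Lemma Good_mul l k : Good l *m Good (map (F op l) k) = Good (l ++ k).
Proof.
rewrite Mx_mul; apply: eq_Mx => a.
  by rewrite cnt_map_inj ?count_cat //; exact: F_inj.
by rewrite F_cat.
Qed.

Lemma Good_nil : Good [::] = 1%:M.
Proof. by rewrite -(Mx_1 (zeta d)); apply: eq_Mx. Qed.

Lemma Good1 i : Good [:: i] = germ_gen op d i.
Proof.
apply/matrixP => a b; rewrite !mxE /= addn0.
by rewrite eq_sym; case: (a == i); rewrite ?expr1 ?expr0.
Qed.

Lemma germ_Good l : germ op d (Good l).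
Proof.
elim/last_ind: l => [|l u IH]; first by rewrite Good_nil; exact: gg_one.
have := Good_mul l [:: u].
rewrite /= cats1 => <-; apply: gg_mul => //.
rewrite Good1; exact: gg_gen.
Qed.

Hypothesis Hcl : is_class op d.

Lemma Good_eq l k : (forall a, count_mem a l = count_mem a k %[mod d]) -> Good l = Good k.
Proof.
move=> H; have d0 : (0 < d)%N by case: Hcl.
rewrite /Good (F_mod Hcs Hcl H); exact: Mx_mod (zeta_expn d0) H.
Qed.

Lemma Good_germ M : germ op d M -> exists l, M = Good l.
Proof.
have d0 : (0 < d)%N by case: Hcl.
elim=> [|i|A B _ [l ->] _ [k ->]|A _ [l ->]].
- by exists [::]; rewrite Good_nil.
- by exists [:: i]; rewrite Good1.
- exists (l ++ map (invF (F_inj Hcs (l:=l))) k); rewrite -Good_mul -map_comp.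
  by congr (_ *m Good _); rewrite -[LHS]map_id; apply: eq_map => x /=; rewrite f_invF.
- pose k := flatten (nseq d.-1 l).
  exists (map (F op l) k); apply: invmx_eq.
  rewrite Good_mul -Good_nil; apply: Good_eq => a.
  have ck : forall j, count_mem a (flatten (nseq j l)) = (j * count_mem a l)%N.
    by elim=> // j IH; rewrite /= count_cat IH mulSn.
  by rewrite count_cat ck /= -mulSn prednK // modnMr mod0n.
Qed.
End Good.

Section Iota.
Variables (op : 'I_n -> 'I_n -> 'I_n) (m d q : nat).
Hypothesis Hcs : is_cycle_set op.
Hypothesis dqm : d = (q * m)%N.
Hypothesis q0 : (0 < q)%N.
Hypothesis m0 : (0 < m)%N.

Lemma iota_pow c : iota_entry q d (zeta q ^+ c) = zeta d ^+ (m * c).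
Proof.
have d0 : (0 < d)%N by rewrite dqm muln_gt0 q0 m0.
rewrite /iota_entry; case: pickP => [j /eqP hj|H].
  have dq : (d %/ q = m)%N by rewrite dqm mulKn.
  rewrite dq; apply/eqP; rewrite zeta_eq //.
  move/eqP: hj; rewrite zeta_eq // => /eqP hj.
  by rewrite dqm [(m * c)%N]mulnC -!muln_modl hj.
by have := H (Ordinal (ltn_pmod c q0)); rewrite /= (expr_mod _ (zeta_expn q0)) eqxx.
Qed.

Lemma iota_0 : iota_entry q d 0 = 0.
Proof.
rewrite /iota_entry; case: pickP => [j /eqP hj|//].
have : zeta q ^+ q = 1 := zeta_expn q0.
move/eqP: hj; rewrite eq_sym expf_eq0 => /andP[_ /eqP ->].
by rewrite expr0n (gtn_eqF q0) => /eqP; rewrite eq_sym oner_eq0.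
Qed.

Lemma iota_Good l : iota_mx q d (Good (op_sub op m) q l) = Good op d (Ex m l).
Proof.
apply/matrixP => a b; rewrite !mxE F_sub cnt_Ex.
case: (_ == b); rewrite ?mulr1 ?mulr0 ?iota_0 //.
exact: iota_pow.
Qed.
End Iota.
End Mat.

Local Close Scope ring_scope.

Lemma crt (d : nat) : 1 < d -> exists u : 'I_(size (primes d)) -> nat,
  \sum_(i < size (primes d)) d`_(nth 0 (primes d) i)^' * u i = 1 %[mod d].
Proof.
move=> d1; have d0 : 0 < d by apply: ltnW.
set r := size (primes d); pose P (i : 'I_r) := nth 0 (primes d) i.
exists (fun i => (egcdn (d`_(P i)^') (d`_(P i))).1).
set S := \sum_(i < r) _.
have Q1 : forall p, p \in primes d -> 1 < d`_p.
  move=> p pd; have pp : prime p by move: pd; rewrite mem_primes => /andP[].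
  rewrite p_part; have := logn_gt0 p d; rewrite pd; case: (logn p d) => // k _.
  rewrite expnS (@leq_trans p) ?prime_gt1 // leq_pmulr // expn_gt0 prime_gt0 //.
have key : forall p, p \in primes d -> S %% d`_p = 1.
  move=> p pd.
  have i0r : index p (primes d) < r by rewrite index_mem.
  pose i0 : 'I_r := Ordinal i0r.
  have Pi0 : P i0 = p by rewrite /P /= nth_index.
  have pp : prime p by move: pd; rewrite mem_primes => /andP[].
  have q1 := Q1 p pd.
  have hu : (d`_p^' * (egcdn d`_p^' d`_p).1) %% d`_p = 1.
    case: egcdnP => [|km kn /= E _]; first exact: part_gt0.
    move: (coprime_partC p d d); rewrite coprime_sym /coprime => /eqP g1.
    by rewrite mulnC E g1 modnMDl modn_small.
  rewrite /S (bigD1 i0) //= -modnDmr.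
  have -> : (\sum_(i < r | i != i0) d`_(P i)^' * (egcdn d`_(P i)^' d`_(P i)).1) %% d`_p = 0.
    apply/eqP; rewrite -/(dvdn _ _); apply: dvdn_sum => i ii0.
    apply: dvdn_mulr.
    have Pip : P i != p.
      rewrite -Pi0 /P nth_uniq ?ltn_ord ?primes_uniq //.
    rewrite -(@partn_part p (P i)^' d); first exact: dvdn_part.
    move=> x; rewrite !inE => /eqP ->; by rewrite eq_sym.
  have Pi0' : nth 0 (primes d) (index p (primes d)) = p by rewrite nth_index.
  by rewrite addn0 ?Pi0 ?Pi0' hu.
have S1 : 0 < S.
  have pdp : pdiv d \in primes d by rewrite mem_primes pdiv_prime // d0 pdiv_dvd.
  have h := key _ pdp; rewrite lt0n; apply/eqP => S0; move: h; rewrite S0 mod0n.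
  done.
apply/eqP; rewrite eqn_mod_dvd //; apply/dvdn_partP => // p pd.
by rewrite -eqn_mod_dvd // (key p pd) modn_small // Q1.
Qed.

Local Open Scope ring_scope.


Section Claim.
Variables (n : nat) (op : 'I_n -> 'I_n -> 'I_n) (d r : nat).
Hypothesis Hcs : is_cycle_set op.
Variables (mm q u : 'I_r -> nat).
Hypothesis dq : forall i, d = (q i * mm i)%N.
Hypothesis q0 : forall i, (0 < q i)%N.
Hypothesis m0 : forall i, (0 < mm i)%N.

Lemma claim (js : seq 'I_r) : uniq js -> forall w : 'I_n -> nat,
  exists Ms : 'I_r -> 'M[algC]_n,
    (forall i, exists A, germ (op_sub op (mm i)) (q i) A /\ Ms i = iota_mx (q i) d A) /\
    exists L, prodmx [seq Ms i | i <- js] = Good op d L /\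
      forall a, (count_mem a L = (\sum_(i <- js) mm i * u i) * w a %[mod d])%N.
Proof.
elim: js => [|j js IH] /= Hu w.
  exists (fun i => iota_mx (q i) d (Good (op_sub op (mm i)) (q i) [::])); split.
    move=> i; exists (Good (op_sub op (mm i)) (q i) [::]); split => //.
    exact: germ_Good (cs_sub Hcs (mm i)) [::].
  exists [::]; split; first by rewrite Good_nil.
  by move=> a; rewrite big_nil.
case/andP: Hu => jnin Hu.
pose lj := flatten [seq nseq (u j * w a)%N a | a <- enum 'I_n].
pose E := Ex (mm j) lj.
pose G := F op E.
have Gi : injective G by exact: F_inj.
pose Gv := invF Gi.
have [Ms' [HMs' [L' [HL' HcL']]]] := IH Hu (fun a => w (Gv a)).
exists (fun i => if i == j then Good op d E else Ms' i); split.
  move=> i; case: eqP => [->|_]; last exact: HMs'.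
  exists (Good (op_sub op (mm j)) (q j) lj); split.
    exact: germ_Good (cs_sub Hcs (mm j)) lj.
  by rewrite (iota_Good _ (dq j) (q0 j) (m0 j)).
exists (E ++ map Gv L'); split.
  rewrite /prodmx /= eqxx -/(prodmx _).
  have -> : [seq (if i == j then Good op d E else Ms' i) | i <- js] = [seq Ms' i | i <- js].
    apply/eq_in_map => i iin; case: eqP => // ij.
    by move: jnin; rewrite -ij iin.
  rewrite HL' -Good_mul //; congr (_ *m Good _ _ _).
  by rewrite -map_comp -[LHS]map_id; apply: eq_map => x /=; rewrite f_invF.
move=> a; rewrite count_cat cnt_Ex cnt_flat big_cons.
have ca : count_mem a (map Gv L') = count_mem (G a) L'.
  rewrite -{1}(invF_f Gi a) cnt_map_inj //.
  exact: (can_inj (f_invF Gi)).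
rewrite ca -modnDmr HcL' /= /Gv (invF_f Gi) modnDmr.
by congr (_ %% _)%N; ring.
Qed.
End Claim.


Unset Implicit Arguments.
Theorem mainTheorem1 (n : nat) (op : 'I_n -> 'I_n -> 'I_n) (d : nat) :
  is_cycle_set op -> is_class op d -> (1 < d)%N ->
  exists (ops : 'I_(size (primes d)) -> 'I_n -> 'I_n -> 'I_n)
         (ds : 'I_(size (primes d)) -> nat),
    (forall i, is_cycle_set (ops i)) /\
    (forall i, is_class (ops i) (ds i)) /\
    (forall i, exists k, ds i = (nth 0 (primes d) i ^ k)%N) /\
    (forall M : 'M[algC]_n,
       germ op d M <->
       exists Ms : 'I_(size (primes d)) -> 'M[algC]_n,
         (forall i, exists A, germ (ops i) (ds i) A /\ Ms i = iota_mx (ds i) d A) /\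
         M = prodmx [seq Ms i | i <- enum 'I_(size (primes d))]).
Proof.
move=> Hcs Hcl d1.
have d0 : (0 < d)%N by apply: ltnW.
set r := size (primes d).
pose P (i : 'I_r) := nth 0%N (primes d) i.
pose q (i : 'I_r) := (d`_(P i))%N.
pose mm (i : 'I_r) := (d`_(P i)^')%N.
have dq : forall i, d = (q i * mm i)%N by move=> i; rewrite /q /mm partnC.
have q0 : forall i, (0 < q i)%N by move=> i; exact: part_gt0.
have m0 : forall i, (0 < mm i)%N by move=> i; exact: part_gt0.
have [u Hu] := crt d1.
exists (fun i => op_sub op (mm i)), q.
split; first by move=> i; exact: cs_sub.
split; first by move=> i; exact: class_sub Hcl (dq i) (q0 i).
split; first by move=> i; exists (logn (P i) d); rewrite /q p_part.
move=> M; split.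
- case/(Good_germ Hcs Hcl) => l ->.
  have [Ms [HMs [L [HL HcL]]]] :=
    claim Hcs u dq q0 m0 (enum_uniq 'I_r) (fun a => count_mem a l).
  exists Ms; split => //.
  rewrite HL; apply: (Good_eq Hcs Hcl) => a.
  rewrite HcL -modnMml.
  have -> : ((\sum_(i <- enum 'I_r) mm i * u i) %% d = 1 %% d)%N.
    by rewrite -Hu big_enum.
  by rewrite modnMml mul1n.
- case=> Ms [HMs ->].
  have : exists L, prodmx [seq Ms i | i <- enum 'I_r] = Good op d L.
    elim: (enum 'I_r) => [|j js [L' HL']]; first by exists [::]; rewrite Good_nil.
    have [A [gA eA]] := HMs j; rewrite /= eA.
    have [lj ->] := Good_germ (cs_sub Hcs (mm j)) (class_sub Hcl (dq j) (q0 j)) gA.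
    rewrite (iota_Good _ (dq j) (q0 j) (m0 j)).
    exists (Ex (mm j) lj ++ map (invF (F_inj Hcs (l:=Ex (mm j) lj))) L').
    rewrite /prodmx /= -/(prodmx _) HL' -Good_mul //; congr (_ *m Good _ _ _).
    by rewrite -map_comp -[LHS]map_id; apply: eq_map => x /=; rewrite f_invF.
  by case=> L ->; exact: germ_Good.
Qed.
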